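(* Every finite set $A\subseteq F^2$ can be written as a disjoint union $$A = A_* \sqcup A_1'\sqcup\cdots\sqcup A_N'$$ with $N\le \log_2(|A|+1)+1$, where $A_*$ is irregular and each $A_i'$ is $k_i$-regular (with constant $C_0=2$) for some integer $k_i\ge1$.
   Context: $F$ is a finite field of odd characteristic in which $-1$ is not a square. A line in $F^2$ is a set $\{p+tv:t\in F\}$ with $p,v\in F^2$, $v\ne0$. Given a constant $C_0\ge1$ and an integer $k\ge1$, a set $A\subseteq F^2$ is $k$-regular (with constant $C_0$) if $k\le C_0|A|^{1/2}$ and there exist a set $L$ of lines (the frame of $A$) with $k/C_0\le|L|\le C_0k$ and a partition $A=\bigsqcup_{\ell\in L}A_\ell$ with $A_\ell\subseteq\ell$ and $|A|/(C_0k)\le|A_\ell|\le C_0|A|/k$ for every $\ell\in L$. A set $A\subseteq F^2$ is irregular if $|\ell\cap A|\le|A|^{1/2}$ for every line $\ell$. *)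

(* Defs.v *)
From mathcomp Require Import all_boot all_order all_algebra.
From Stdlib Require Import Reals.

Set Implicit Arguments.
Unset Strict Implicit.
Unset Printing Implicit Defensive.

Import GRing.Theory.

Section Geometry.
Variable F : finFieldType.

Local Open Scope ring_scope.

Definition line_through (p v : F * F) : {set F * F} :=
  [set (p.1 + t * v.1, p.2 + t * v.2) | t : F].

Definition is_line (l : {set F * F}) : Prop :=
  exists p v : F * F, v != (0, 0) /\ l = line_through p v.

End Geometry.

Section Regularity.
Variable F : finFieldType.

(* A is k-regular with constant C0 (C0 >= 1 is assumed by the paper; here it
   is a parameter, instantiated with 2 in the main statement). *)
Definition k_regular (C0 : R) (k : nat) (A : {set F * F}) : Prop :=
  Rle (INR k) (Rmult C0 (sqrt (INR #|A|))) /\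
  exists (L : {set {set F * F}}) (Apart : {set F * F} -> {set F * F}),
    (forall l, l \in L -> is_line l) /\
    Rle (Rdiv (INR k) C0) (INR #|L|) /\ Rle (INR #|L|) (Rmult C0 (INR k)) /\
    A = \bigcup_(l in L) Apart l /\
    (forall l1 l2, l1 \in L -> l2 \in L -> l1 != l2 ->
        [disjoint Apart l1 & Apart l2]) /\
    (forall l, l \in L ->
        Apart l \subset l /\
        Rle (Rdiv (INR #|A|) (Rmult C0 (INR k))) (INR #|Apart l|) /\
        Rle (INR #|Apart l|) (Rdiv (Rmult C0 (INR #|A|)) (INR k))).

Definition irregular (A : {set F * F}) : Prop :=
  forall l : {set F * F}, is_line l ->
    Rle (INR #|l :&: A|) (sqrt (INR #|A|)).

End Regularity.

(* Main.v *)
Require Import Defs.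
From mathcomp Require Import all_boot all_order all_algebra.
From Stdlib Require Import Reals Lra Psatz Classical.
From mathcomp Require Import zify.
Import GRing.Theory.

Set Implicit Arguments.
Unset Strict Implicit.

Section Rhelp.

Lemma INR_leP (a b : nat) : (a <= b)%nat -> (INR a <= INR b)%R.
Proof. by move=> h; apply le_INR; apply/leP. Qed.

Lemma INR_mul (a b : nat) : INR (a * b)%nat = (INR a * INR b)%R.
Proof. by rewrite mulnE mult_INR. Qed.

Lemma sqrt_step (b M : nat) : (sqrt (INR b) < INR M)%R -> (b < M * M)%nat.
Proof.
move=> h.
have h0 := sqrt_pos (INR b).
have hb : (sqrt (INR b) * sqrt (INR b) = INR b)%R by apply sqrt_sqrt; apply pos_INR.
have : (INR b < INR (M * M)%nat)%R by rewrite INR_mul; nra.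
by move/INR_lt/ltP.
Qed.

Lemma sq_le (k s : nat) : (k * k <= 4 * s)%nat -> (INR k <= INR 2 * sqrt (INR s))%R.
Proof.
move=> h.
have h1 := INR_leP h; rewrite !INR_mul in h1.
have h2 := sqrt_le_1_alt _ _ h1.
rewrite sqrt_square in h2; last by apply pos_INR.
rewrite sqrt_mult in h2; try apply pos_INR.
have -> : INR 2 = sqrt (INR 4).
  replace (INR 4) with (INR 2 * INR 2)%R by (simpl; ring).
  by rewrite sqrt_square //; apply pos_INR.
exact h2.
Qed.

Lemma div_le (a b c : nat) : (0 < c)%nat -> (a <= b * c)%nat -> (Rdiv (INR a) (INR c) <= INR b)%R.
Proof.
move=> hc hab.
have Hc : (0 < INR c)%R by apply lt_0_INR; apply/ltP.
have h := INR_leP hab; rewrite INR_mul in h.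
apply Rmult_le_reg_r with (INR c) => //.
replace (INR a / INR c * INR c)%R with (INR a) by (field; lra). exact h.
Qed.

Lemma le_div (a b c : nat) : (0 < c)%nat -> (a * c <= b)%nat -> (INR a <= Rdiv (INR b) (INR c))%R.
Proof.
move=> hc hab.
have Hc : (0 < INR c)%R by apply lt_0_INR; apply/ltP.
have h := INR_leP hab; rewrite INR_mul in h.
apply Rmult_le_reg_r with (INR c) => //.
replace (INR b / INR c * INR c)%R with (INR b) by (field; lra). exact h.
Qed.

End Rhelp.
Lemma card_bigcup_disj (I T : finType) (S : {set I}) (P : I -> {set T}) :
  (forall i j, i \in S -> j \in S -> i != j -> [disjoint P i & P j]) ->
  #|\bigcup_(i in S) P i| = \sum_(i in S) #|P i|.
Proof.
move: {2}#|S| (erefl #|S|) => n; elim: n S => [|n IH] S hS hd.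
  move/eqP: hS; rewrite cards_eq0 => /eqP ->.
  by rewrite !big_set0 cards0.
have [i iS] : exists i, i \in S.
  by apply/set0Pn; rewrite -card_gt0 hS.
rewrite (big_setD1 i iS) (big_setD1 i iS) /=.
rewrite cardsU.
have -> : P i :&: \bigcup_(j in S :\ i) P j = set0.
  apply: disjoint_setI0; apply: bigcup_disjoint => j.
  rewrite !inE => /andP [ji jS]; apply: hd => //; by rewrite eq_sym.
rewrite cards0 subn0 IH //.
  by move: hS; rewrite (cardsD1 i S) iS /= add1n => -[].
move=> a b; rewrite !inE => /andP[_ aS] /andP[_ bS]; exact: hd.
Qed.

Section Main.
Variable F : finFieldType.

Definition cls (X : {set F * F}) := trunc_log 2 #|X|.

Lemma class_regular (L : {set {set F * F}}) (P : {set F * F} -> {set F * F}) j :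
  L != set0 ->
  (forall l, l \in L -> is_line l /\ P l \subset l /\ cls (P l) = j /\ P l != set0) ->
  (forall l1 l2, l1 \in L -> l2 \in L -> l1 != l2 -> [disjoint P l1 & P l2]) ->
  (\sum_(l in L) #|P l| < expn 4 j.+1)%nat ->
  k_regular (INR 2) #|L| (\bigcup_(l in L) P l).
Proof.
move=> L0 hL hd hsum.
have hs := card_bigcup_disj hd.
set s := #|\bigcup_(l in L) P l| in hs *.
set k := #|L|.
have k0 : (0 < k)%nat by rewrite card_gt0.
set t := expn 2 j.
have hp : forall l, l \in L -> (t <= #|P l|)%nat && (#|P l| < 2 * t)%nat.
  move=> l lL; have [_ [_ [hc hn]]] := hL l lL.
  have hpos : (0 < #|P l|)%nat by rewrite card_gt0.
  have := trunc_logP (isT : (1 < 2)%nat) hpos.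
  have := trunc_log_ltn #|P l| (isT : (1 < 2)%nat).
  rewrite /cls in hc; rewrite hc /t expnS => -> ->; done.
have hs1 : (k * t <= s)%nat.
  rewrite hs -sum_nat_const; apply: leq_sum => l lL.
  by case/andP: (hp l lL).
have hs2 : (s <= k * (2 * t))%nat.
  rewrite hs -sum_nat_const; apply: leq_sum => l lL.
  by case/andP: (hp l lL) => _ /ltnW.
have h4 : expn 4 j.+1 = 4 * t * t.
  by rewrite /t expnS -mulnA -expnMn.
rewrite -hs h4 in hsum.
split.
  apply: sq_le.
  have hk : (k < 4 * t)%nat by nia.
  nia.
exists L, P; rewrite -/k.
split; first by move=> l lL; case: (hL l lL).
split.
  have := pos_INR k; replace (INR 2) with 2%R by (simpl; ring); move=> ?; lra.
split.
  have := pos_INR k; replace (INR 2) with 2%R by (simpl; ring); move=> ?; lra.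
split; first by [].
split; first by [].
move=> l lL; have [_ [hsub _]] := hL l lL.
have /andP[hp1 hp2] := hp l lL.
split; first by [].
split.
  rewrite -INR_mul. apply: div_le; first by rewrite muln_gt0.
  nia.
rewrite -INR_mul. apply: le_div => //.
nia.
Qed.

Definition Inv (B : {set F * F}) (S : {set {set F * F}}) (P : {set F * F} -> {set F * F}) :=
  (forall l, l \in S -> is_line l) /\
  (forall l, l \in S -> P l \subset l /\ P l \subset B /\ P l != set0) /\
  (forall l1 l2, l1 \in S -> l2 \in S -> l1 != l2 -> [disjoint P l1 & P l2]) /\
  irregular (B :\: \bigcup_(l in S) P l) /\
  (forall l, l \in S ->
     (\sum_(x in S | cls (P x) == cls (P l)) #|P x| < expn 4 (cls (P l)).+1)%nat).

Lemma decomp (B : {set F * F}) : exists S P, Inv B S P.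
Proof.
move: {2}#|B| (erefl #|B|) => n; elim/ltn_ind: n B => n IH B hB.
case: (classic (irregular B)) => Hirr.
  exists set0, (fun _ => set0); split; first by move=> l; rewrite inE.
  split; first by move=> l; rewrite inE.
  split; first by move=> l1 l2; rewrite inE.
  split; first by rewrite big_set0 setD0.
  by move=> l; rewrite inE.
have [l [ll hl]] : exists l, is_line l /\ (sqrt (INR #|B|) < INR #|l :&: B|)%R.
  apply: NNPP => H; apply: Hirr => l ll; apply: Rnot_lt_le => H'; apply: H; eauto.
rewrite setIC in hl.
set Pl := B :&: l in hl.
have hm := sqrt_step hl.
have Pl0 : Pl != set0.
  by rewrite -card_gt0; case: #|Pl| hm => [|//]; rewrite muln0.
set B' := B :\: l.
have hB' : (#|B'| + #|Pl| = #|B|)%nat by rewrite addnC cardsID.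
have [S' [P' [I1 [I2 [I3 [I4 I5]]]]]] : exists S P, Inv B' S P.
  apply: (IH #|B'|) => //; rewrite -hB -hB'.
  by rewrite -[X in (X < _)%nat]addn0 ltn_add2l card_gt0.
have lS' : l \notin S'.
  apply/negP => lS; have [s1 [s2 s3]] := I2 l lS.
  case/set0Pn: s3 => x xP.
  by move: (subsetP s1 x xP) (subsetP s2 x xP); rewrite !inE => ->.
pose P := fun x => if x == l then Pl else P' x.
have PP' : forall x, x \in S' -> P x = P' x.
  move=> x xS; rewrite /P; case: eqP => // exl.
  by rewrite exl (negbTE lS') in xS.
have Pl' : P l = Pl by rewrite /P eqxx.
have hU : \bigcup_(x in S') P x = \bigcup_(x in S') P' x by apply: eq_bigr.
have hsumS' : (\sum_(x in S') #|P' x| <= #|B'|)%nat.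
  rewrite -card_bigcup_disj //; apply: subset_leq_card.
  by apply/bigcupsP => x xS; case: (I2 x xS) => _ [].
exists (l |: S'), P; split.
  by move=> x; rewrite in_setU1 => /orP[/eqP ->|]; [ |apply: I1].
split.
  move=> x; rewrite in_setU1 => /orP[/eqP ->|xS].
    by rewrite Pl' subsetIr subsetIl.
  rewrite PP' //; have [s1 [s2 s3]] := I2 x xS; split => //; split => //.
  by apply: subset_trans s2 (subsetDl _ _).
split.
  have key : forall x, x \in S' -> [disjoint P l & P x].
    move=> x xS; rewrite Pl' PP' //; have [_ [s2 _]] := I2 x xS.
    rewrite disjoint_sym; apply: (disjointWl s2); rewrite disjoint_subset.
    apply/subsetP => y; rewrite /B' /Pl !inE => /andP[ynl _].
    by rewrite (negbTE ynl) andbF.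
  move=> l1 l2; rewrite !in_setU1 => /orP[/eqP ->|l1S] /orP[/eqP ->|l2S].
  - by rewrite eqxx.
  - by move=> _; apply: key.
  - by move=> _; rewrite disjoint_sym; apply: key.
  - by move=> ne; rewrite !PP' //; apply: I3.
split.
  rewrite big_setU1 //= Pl' hU.
  have -> : B :\: (Pl :|: \bigcup_(x in S') P' x) = B' :\: \bigcup_(x in S') P' x.
    apply/setP => y; rewrite !inE.
    by case: (y \in B); case: (y \in l); case: (y \in \bigcup_(x in S') P' x).
  exact: I4.
set c := cls Pl.
have hmc : (#|Pl| * #|Pl| < expn 4 c.+1)%nat.
  have h2 := trunc_log_ltn #|Pl| (isT : (1 < 2)%nat).
  have -> : expn 4 c.+1 = expn 2 c.+1 * expn 2 c.+1 by rewrite -expnMn.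
  rewrite -/(cls Pl) -/c in h2.
  by apply: ltn_mul.
have caseA : (\sum_(x in l |: S' | cls (P x) == c) #|P x| < expn 4 c.+1)%nat.
  rewrite big_mkcondr big_setU1 //= Pl' eqxx.
  apply: leq_ltn_trans hmc.
  apply: leq_trans (ltnW hm).
  rewrite -hB' addnC leq_add2r.
  apply: leq_trans hsumS'.
  apply: leq_sum => x xS; rewrite PP' //; by case: ifP.
move=> l0; rewrite in_setU1 => /orP[/eqP ->|l0S].
  by rewrite Pl'.
rewrite PP' //.
case: (eqVneq (cls (P' l0)) c) => [-> //|ne].
rewrite big_mkcondr big_setU1 //= Pl' -/c (eq_sym c) (negbTE ne) add0n.
have -> : \sum_(x in S') (if cls (P x) == cls (P' l0) then #|P x| else 0)
   = \sum_(x in S' | cls (P' x) == cls (P' l0)) #|P' x|.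
  by rewrite big_mkcondr; apply: eq_bigr => x xS; rewrite PP'.
exact: I5.
Qed.

End Main.

Lemma INR_expn2 N : INR (expn 2 N) = (INR 2 ^ N)%R.
Proof.
elim: N => [|N IH] //=; by rewrite expnS INR_mul IH.
Qed.

Lemma log_bound (a N : nat) : (expn 2 N < 2 * (a + 1))%nat ->
  Rle (INR N) (Rplus (Rdiv (ln (Rplus (INR a) (INR 1))) (ln (INR 2))) (INR 1)).
Proof.
move=> h.
have h1 := lt_INR _ _ (elimT ltP h).
rewrite INR_mul INR_expn2 plus_INR in h1.
have h2 : (0 < INR 2 ^ N)%R by apply pow_lt; simpl; lra.
have h3 := ln_increasing _ _ h2 h1.
rewrite ln_pow in h3; last by simpl; lra.
have ha := pos_INR a.
rewrite ln_mult in h3; [|simpl; lra|simpl; lra].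
have hl2 : (0 < ln (INR 2))%R by replace (INR 2) with 2%R by (simpl; ring); move: ln_lt_2 => ?; lra.
apply Rlt_le.
change (INR 1) with 1%R in h3; change (INR 1) with 1%R.
apply Rmult_lt_reg_r with (ln (INR 2)) => //.
replace ((ln (INR a + 1) / ln (INR 2) + 1) * ln (INR 2))%R
  with (ln (INR a + 1) + ln (INR 2))%R by (field; lra).
lra.
Qed.

Import GRing.Theory.
Local Open Scope ring_scope.

Theorem lemma4p1 (F : finFieldType)
    (Fodd : 2%N \notin [pchar F])
    (Fm1 : ~ exists x : F, x * x = - 1)
    (A : {set F * F}) :
  exists (N : nat) (Astar : {set F * F})
         (Ap : 'I_N -> {set F * F}) (ks : 'I_N -> nat),
    A = Astar :|: \bigcup_(i < N) Ap i /\
    (forall i : 'I_N, [disjoint Astar & Ap i]) /\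
    (forall i j : 'I_N, i != j -> [disjoint Ap i & Ap j]) /\
    Rle (INR N) (Rplus (Rdiv (ln (Rplus (INR #|A|) (INR 1))) (ln (INR 2))) (INR 1)) /\
    irregular Astar /\
    (forall i : 'I_N, leq 1 (ks i) /\ k_regular (INR 2) (ks i) (Ap i)).
Proof.
have [S [P [I1 [I2 [I3 [I4 I5]]]]]] := decomp A.
set t := trunc_log 2 #|A|.
pose J := [seq j <- iota 0 t.+1 | [exists l in S, cls (P l) == j]].
have Juniq : uniq J by apply: filter_uniq; apply: iota_uniq.
have hJ : forall i, (i < size J)%nat -> exists l, l \in S /\ cls (P l) = nth 0%nat J i.
  move=> i hi; have := mem_nth 0%nat hi; rewrite mem_filter => /andP[/existsP[l]].
  by case/andP => lS /eqP e _; exists l.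
have hcls : forall l, l \in S -> cls (P l) \in J.
  move=> l lS; rewrite mem_filter mem_iota add0n ltnS leq_trunc_log ?andbT.
    by apply/existsP; exists l; rewrite lS eqxx.
  by apply: subset_leq_card; case: (I2 l lS) => _ [].
pose U := \bigcup_(l in S) P l.
have UA : U \subset A by apply/bigcupsP => l lS; case: (I2 l lS) => _ [].
pose Sj (i : 'I_(size J)) := [set l in S | cls (P l) == nth 0%nat J i].
have hU : \bigcup_(i < size J) \bigcup_(l in Sj i) P l = U.
  apply/setP => x; apply/bigcupP/bigcupP.
    case=> i _ /bigcupP [l]; rewrite inE => /andP[lS _] xP; by exists l.
  case=> l lS xP.
  have hi : (index (cls (P l)) J < size J)%nat by rewrite index_mem hcls.
  exists (Ordinal hi) => //; apply/bigcupP; exists l => //.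
  by rewrite inE lS /= nth_index ?hcls.
exists (size J), (A :\: U), (fun i => \bigcup_(l in Sj i) P l), (fun i => #|Sj i|).
split.
  rewrite hU; apply/setP => x; rewrite !inE.
  case xU: (x \in U); last by rewrite orbF.
  by rewrite (subsetP UA x xU) orbT.
split.
  move=> i; apply: (disjointWr (B := U)).
    by rewrite -hU; apply: (bigcup_sup i).
  rewrite disjoint_subset; apply/subsetP => x; rewrite !inE => /andP[xU _].
  by rewrite xU.
split.
  move=> i j ne; apply: bigcup_disjoint => l lj.
  rewrite disjoint_sym; apply: bigcup_disjoint => l' li.
  move: li lj; rewrite !inE => /andP[l'S /eqP cl'] /andP[lS /eqP cl].
  apply: I3 => //; apply/eqP => e.
  move: ne; apply/negP; rewrite negbK; apply/eqP/val_inj/eqP.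
  by rewrite -(nth_uniq 0%nat (ltn_ord i) (ltn_ord j) Juniq) -cl' -cl e.
split.
  apply: log_bound.
  case N0: (size J) => [|N]; first by rewrite expn0; lia.
  have [l [lS _]] := hJ 0%nat ltac:(by rewrite N0).
  have A0 : (0 < #|A|)%nat.
    have [s1 [s2 s3]] := I2 l lS; rewrite -card_gt0 in s3.
    by apply: leq_trans s3 (subset_leq_card s2).
  have hN : (N.+1 <= t.+1)%nat by rewrite -N0 size_filter -{2}(size_iota 0 t.+1) count_size.
  have := trunc_logP (isT : (1 < 2)%nat) A0; rewrite -/t => ht.
  have : (expn 2 N.+1 <= expn 2 t.+1)%nat by rewrite leq_exp2l.
  rewrite !expnS => h; nia.
split; first exact: I4.
move=> i.
have [l [lS cl]] := hJ i (ltn_ord i).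
have lSj : l \in Sj i by rewrite inE lS cl eqxx.
have Sj0 : Sj i != set0 by apply/set0Pn; exists l.
split; first by rewrite card_gt0.
apply: (class_regular (j := nth 0%nat J i)) => //.
- move=> l0; rewrite inE => /andP[l0S /eqP c0].
  have [s1 [s2 s3]] := I2 l0 l0S; split; first exact: I1.
  by split.
- move=> l1 l2; rewrite !inE => /andP[l1S _] /andP[l2S _]; exact: I3.
- have := I5 l lS; rewrite cl.
  by rewrite big_set.
Qed.
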